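(* Let $G$ be a connected graph with $n$ vertices and let $l\ge 2$. Let $B_{n\times l}^2$ be a graph obtained from $l$ disjoint copies $G_{n,1},\dots,G_{n,l}$ of $G$ by adding, for each $1\le i\le l-1$, a single edge joining some vertex of $G_{n,i}$ to some vertex of $G_{n,i+1}$. Then $$0 < \lambda_2(B_{n\times l}^2) \le 2.$$
   Context: All graphs are finite, simple and unweighted. For a graph $H$ with adjacency matrix $A$ and diagonal degree matrix $D$, the graph Laplacian is $L_H = D - A$, with eigenvalues ordered $0=\lambda_1 \le \lambda_2 \le \dots$; $\lambda_2(H)$ denotes the second smallest eigenvalue of $L_H$. *)

(* Defs.v *)
From HB Require Import structures.
From mathcomp Require Import all_boot all_order all_algebra.
From mathcomp.real_closed Require Import polyrcf.
Set Implicit Arguments. Unset Strict Implicit. Unset Printing Implicit Defensive.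
Import Order.TTheory GRing.Theory Num.Theory.
Local Open Scope ring_scope.

Definition simple_graph (V : finType) (e : rel V) : Prop :=
  symmetric e /\ irreflexive e.

Definition connected_graph (V : finType) (e : rel V) : Prop :=
  forall x y : V, connect e x y.

Definition laplacian (R : nzRingType) (V : finType) (e : rel V) : 'M[R]_#|V| :=
  \matrix_(i, j)
    ((i == j)%:R * (#|[pred y | e (enum_val i) y]|)%:R
     - (e (enum_val i) (enum_val j))%:R).

(* The eigenvalues of a square matrix over a real closed field, listed in
   nondecreasing order and repeated according to their (algebraic)
   multiplicity as roots of the characteristic polynomial.  For a real
   symmetric matrix (e.g. a Laplacian) the characteristic polynomial splits,
   so this is the full spectrum. *)
Definition spectrum (R : rcfType) (m : nat) (A : 'M[R]_m) : seq R :=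
  flatten [seq nseq (mup x (char_poly A)) x | x <- rootsR (char_poly A)].

(* lambda_k(A): the k-th smallest eigenvalue (1-indexed), as in the paper. *)
Definition lambda (R : rcfType) (m : nat) (A : 'M[R]_m) (k : nat) : R :=
  nth 0 (spectrum A) k.-1.

Definition lambda2 (R : rcfType) (V : finType) (e : rel V) : R :=
  lambda (laplacian R e) 2.

(* The graph B^2_{n x l}: l disjoint copies of (T, g), vertex (i, x) being
   vertex x of copy i, and for each i with i+1 < l an extra edge joining
   vertex (a i) of copy i to vertex (b i) of copy i+1. *)
Definition chain_graph (T : finType) (g : rel T) (l : nat) (a b : 'I_l -> T)
  : rel ('I_l * T) :=
  fun u v =>
    ((u.1 == v.1) && g u.2 v.2)
    || [&& (u.1.+1 == v.1 :> nat), u.2 == a u.1 & v.2 == b u.1]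
    || [&& (v.1.+1 == u.1 :> nat), v.2 == a v.1 & u.2 == b v.1].

(* Main.v *)
Require Import Defs.
From HB Require Import structures.
From mathcomp Require Import all_boot all_order all_algebra.
From mathcomp.real_closed Require Import polyrcf.
From mathcomp Require Import ring.
From mathcomp.real_closed Require Import complex.
Set Implicit Arguments. Unset Strict Implicit. Unset Printing Implicit Defensive.
Import Order.TTheory GRing.Theory Num.Theory.
Local Open Scope ring_scope.
Local Open Scope sesquilinear_scope.

Lemma count_flat_nseq (T : eqType) (f : T -> nat) (t : seq T) y :
  count_mem y (flatten [seq nseq (f x) x | x <- t]) = (count_mem y t * f y)%N.
Proof.
elim: t => [|x t IH] //=; rewrite count_cat IH count_nseq /=.
by case: eqP => [->|_]; rewrite ?mul1n ?mul0n.
Qed.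

Lemma mem_flat_nseq (T : eqType) (f : T -> nat) (t : seq T) y :
  y \in flatten [seq nseq (f x) x | x <- t] -> y \in t.
Proof.
elim: t => [|x t IH] //=; rewrite mem_cat inE => /orP[/nseqP[-> _]|/IH ->].
  by rewrite eqxx.
by rewrite orbT.
Qed.

Lemma sorted_flat_nseq (R : rcfType) (f : R -> nat) (t : seq R) :
  sorted <%R t -> sorted <=%R (flatten [seq nseq (f x) x | x <- t]).
Proof.
move=> st; rewrite sorted_pairwise; last exact: le_trans.
elim: t st => [|x t IH] //= pth.
rewrite pairwise_cat; apply/and3P; split.
- apply/allrelP => u v /nseqP[-> _] /mem_flat_nseq vt.
  have : all (> x) t by apply: order_path_min => //; exact: lt_trans.
  by move/allP/(_ _ vt)/ltW.
- elim: (f x) => [|k IHk] //=; rewrite IHk andbT.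
  by apply/allP => u /nseqP[-> _].
- by apply: IH; exact: path_sorted pth.
Qed.

Lemma spectrum_prod (R : rcfType) (s : seq R) (p : {poly R}) :
  p = \prod_(x <- s) ('X - x%:P) ->
  flatten [seq nseq (mup x p) x | x <- rootsR p] = sort <=%R s.
Proof.
move=> hp.
have pN0 : p != 0 by rewrite hp monic_neq0 // monic_prod_XsubC.
apply: (@sorted_eq _ <=%R le_trans).
- move=> x y; exact: le_anti.
- by apply: sorted_flat_nseq; exact: sorted_roots.
- by apply: sort_sorted; exact: le_total.
apply/allP => y _ /=; apply/eqP.
rewrite count_flat_nseq count_uniq_mem ?uniq_roots //.
rewrite count_sort.
have -> : count_mem y s = mup y p by rewrite hp mu_prod_XsubC.
have := roots_on_rootsR pN0 y; rewrite in_itv /= => <-.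
case: (boolP (root p y)) => [_|ny]; first by rewrite mul1n.
by rewrite mul0n mupNroot.
Qed.
Lemma sort_second (R : realDomainType) (s : seq R) (c : R) :
  (count (fun x : R => (x <= 0)%R) s <= 1)%N -> (2 <= count (fun x : R => (x <= c)%R) s)%N ->
  0 < nth 0 (sort <=%R s) 1 <= c.
Proof.
move=> h0 h2; rewrite -(count_sort <=%R) in h0; rewrite -(count_sort <=%R) in h2; move: h0 h2.
have := sort_sorted (@le_total _ R) s.
case: (sort <=%R s) => [|t0 [|t1 rest]] //=; first by move=> _ _; case: (_ <= _).
move=> /andP[le01 pth] h0 h2.
have allr : all (>= t1) rest by apply: order_path_min => //; exact: le_trans.
apply/andP; split.
  rewrite ltNge; apply/negP => t10.
  move: h0; rewrite t10 (le_trans le01 t10) /=; by case: count.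
rewrite leNgt; apply/negP => t1c.
have : count (fun x => x <= c) rest = 0%N.
  apply/eqP; rewrite -leqn0 leqNgt -has_count; apply/negP => /hasP[y yr yc].
  have := allP allr y yr => /= ley.
  by move: (lt_le_trans t1c ley); rewrite ltNge yc.
move=> h; move: h2 => /=; rewrite h addn0 (leNgt t1 c) t1c /=.
by case: (_ <= _)%R.
Qed.
Section Spec.
Variable C : numClosedFieldType.
Variable n : nat.
Variable M : 'M[C]_n.
Hypothesis hM : M ^t* = M.

Let P := spectralmx M.
Let d := spectral_diag M.

Lemma M_normal : M \is normalmx.
Proof. by apply/normalmxP; rewrite hM. Qed.

Lemma MPd : M = P^t* *m diag_mx d *m P.
Proof.
rewrite -invmx_unitary ?spectral_unitarymx //.
exact/orthomx_spectralP/M_normal.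
Qed.

Lemma PPt : P *m P^t* = 1%:M.
Proof. exact/unitarymxP/spectral_unitarymx. Qed.

Lemma PtP : P^t* *m P = 1%:M.
Proof.
rewrite -invmx_unitary ?spectral_unitarymx //; apply: mulVmx.
exact: spectral_unit.
Qed.

Lemma ct_eq (u : 'rV[C]_n) : (u *m P^t*)^t* = P *m u^t*.
Proof. by rewrite trmx_mul map_mxM trmxCK. Qed.

Lemma quad_diag (c : 'rV[C]_n) :
  (c *m diag_mx d *m c^t*) 0 0 = \sum_j c 0 j * d 0 j * (c 0 j)^*.
Proof.
rewrite mxE; apply: eq_bigr => j _; rewrite mul_mx_diag !mxE.
done.
Qed.

Lemma quad_spec (u : 'rV[C]_n) :
  (u *m M *m u^t*) 0 0 =
  \sum_j (u *m P^t*) 0 j * d 0 j * ((u *m P^t*) 0 j)^*.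
Proof.
by rewrite {1}MPd !mulmxA -(mulmxA _ P) -ct_eq quad_diag.
Qed.

Lemma norm_spec (u : 'rV[C]_n) :
  (u *m u^t*) 0 0 = \sum_j (u *m P^t*) 0 j * ((u *m P^t*) 0 j)^*.
Proof.
rewrite -{1}(mulmx1 u) -PtP mulmxA -mulmxA -ct_eq mxE.
by apply: eq_bigr => j _; rewrite !mxE.
Qed.

Lemma row_coord (j : 'I_n) : row j P *m P^t* = delta_mx 0 j.
Proof. by rewrite -row_mul PPt row1. Qed.

Lemma quad_row (j : 'I_n) : (row j P *m M *m (row j P)^t*) 0 0 = d 0 j.
Proof.
rewrite quad_spec row_coord (bigD1 j) //= big1 ?addr0.
  by rewrite !mxE !eqxx /= mul1r conjC1 mulr1.
by move=> k kj; rewrite !mxE eqxx (negbTE kj) /= !mul0r.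
Qed.

Lemma row_dot (j k : 'I_n) : (row j P *m (row k P)^t*) 0 0 = (j == k)%:R.
Proof.
have /matrixP/(_ j k) := PPt; rewrite !mxE => <-.
by apply: eq_bigr => x _; rewrite !mxE.
Qed.

Lemma char_poly_spec : char_poly M = \prod_j ('X - (d 0 j)%:P).
Proof.
have -> : \prod_j ('X - (d 0 j)%:P) = char_poly (diag_mx d).
  by rewrite char_poly_trig //; apply: eq_bigr => j _; rewrite mxE eqxx mulr1n.
rewrite /char_poly /char_poly_mx MPd.
set f := @polyC C.
have -> : 'X%:M - map_mx f (P^t* *m diag_mx d *m P) =
   map_mx f (P^t*) *m ('X%:M - map_mx f (diag_mx d)) *m map_mx f P.
  rewrite mulmxBr mulmxBl !map_mxM; congr (_ - _).
  rewrite mul_mx_scalar -scalemxAl -map_mxM PtP map_mx1 scalemx1.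
  done.
rewrite !det_mulmx mulrC mulrA -det_mulmx -map_mxM PPt map_mx1 det1 mul1r.
done.
Qed.

End Spec.
Section Graph.
Variable C : numClosedFieldType.
Variable V : finType.
Variable e : rel V.
Hypothesis esym : symmetric e.

Local Notation N := #|V|.
Local Notation L := (laplacian C e).
Local Notation ev := (@enum_val V (fun _ => true)).
Local Notation a i j := ((e (ev i) (ev j))%:R : C).

Lemma deg_sum (x : V) :
  (#|[pred y | e x y]|)%:R = \sum_(j < N) (e x (ev j))%:R :> C.
Proof.
rewrite -sum1_card natr_sum big_mkcond /=.
rewrite (eq_bigl (fun y => y \in V)) //. rewrite big_enum_val.
apply: eq_bigr => j _; rewrite inE; by case: (e x _).
Qed.
Lemma lap_entry (i j : 'I_N) :
  L i j = (i == j)%:R * (\sum_k a i k) - a i j.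
Proof. by rewrite mxE deg_sum. Qed.

Lemma lap_conj : L ^t* = L.
Proof.
apply/matrixP => i j; rewrite !mxE rmorphB rmorphM /= !conjC_nat.
case: (eqVneq i j) => [->|ij] //.
by rewrite !mul0r (esym (ev j)).

Qed.

Lemma quad_F (u : 'rV[C]_N) :
  (u *m L *m u^t*) 0 0 =
  \sum_i \sum_j a i j * (u 0 i * (u 0 i)^* - u 0 i * (u 0 j)^*).
Proof.
rewrite mxE.
under eq_bigr => j _ do rewrite !mxE big_distrl /=.
rewrite exchange_big /=; apply: eq_bigr => i _.
under eq_bigr => j _ do rewrite lap_entry mulrBr mulrBl.
set D := (\sum_k (e (ev i) (ev k))%:R : C).
rewrite sumrB (bigD1 i) //= [X in _ + X - _]big1 => [|j ji]; last first.
  by rewrite eq_sym (negbTE ji) !mul0r mulr0 mul0r.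
rewrite eqxx mul1r addr0 /D mulr_sumr mulr_suml -sumrB.
by apply: eq_bigr => j _; ring.
Qed.

Lemma quad_form (u : 'rV[C]_N) :
  2 * (u *m L *m u^t*) 0 0 =
  \sum_i \sum_j a i j * ((u 0 i - u 0 j) * (u 0 i - u 0 j)^*).
Proof.
have -> : \sum_i \sum_j a i j * ((u 0 i - u 0 j) * (u 0 i - u 0 j)^*) =
   \sum_i \sum_j (a i j * (u 0 i * (u 0 i)^* - u 0 i * (u 0 j)^*) +
                  a j i * (u 0 j * (u 0 j)^* - u 0 j * (u 0 i)^*)).
  apply: eq_bigr => i _; apply: eq_bigr => j _.
  rewrite (esym (ev j) (ev i)) rmorphB /=; ring.
under eq_bigr => i _ do rewrite big_split /=.
rewrite big_split /= [X in _ + X]exchange_big /= -quad_F.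
by rewrite mulr_natl mulr2n.
Qed.

Lemma quad_ge0 (u : 'rV[C]_N) : 0 <= (u *m L *m u^t*) 0 0.
Proof.
have : 0 <= 2 * (u *m L *m u^t*) 0 0.
  rewrite quad_form; apply: sumr_ge0 => i _; apply: sumr_ge0 => j _.
  by apply: mulr_ge0; [exact: ler0n | exact: mul_conjC_ge0].
by rewrite pmulr_rge0 // ltr0n.
Qed.

Lemma quad_eq0 (u : 'rV[C]_N) : (u *m L *m u^t*) 0 0 = 0 ->
  forall i j, e (ev i) (ev j) -> u 0 i = u 0 j.
Proof.
move=> Q0 i j eij.
have h : \sum_i \sum_j a i j * ((u 0 i - u 0 j) * (u 0 i - u 0 j)^*) = 0.
  by rewrite -quad_form Q0 mulr0.
have nn : forall i j, 0 <= a i j * ((u 0 i - u 0 j) * (u 0 i - u 0 j)^*).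
  by move=> i' j'; apply: mulr_ge0; [exact: ler0n | exact: mul_conjC_ge0].
have /psumr_eq0P h1 := h.
have h2 : forall i, 0 <= \sum_j a i j * ((u 0 i - u 0 j) * (u 0 i - u 0 j)^*).
  by move=> i'; apply: sumr_ge0 => j' _.
move/(_ (fun i _ => h2 i)) : h1 => h1.
have /psumr_eq0P h3 := h1 i isT.
have := h3 (fun j' _ => nn i j') j isT.
rewrite eij mul1r => /eqP; rewrite mul_conjC_eq0 subr_eq0 => /eqP //.
Qed.

Lemma quad_const (u : 'rV[C]_N) : (u *m L *m u^t*) 0 0 = 0 ->
  (forall x y, connect e x y) -> forall i j, u 0 i = u 0 j.
Proof.
move=> Q0 conn i j.
pose f x := u 0 (enum_rank x).
have fe : forall x y, e x y -> f x = f y.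
  move=> x y exy; apply: quad_eq0 => //; by rewrite !enum_rankK.
have : f (ev i) = f (ev j).
  have /connectP [p pth ->] := conn (ev i) (ev j).
  elim: p (ev i) pth => [|z p IH] x //= /andP[exz pth].
  by rewrite (fe _ _ exz) IH.
by rewrite /f !enum_valK.
Qed.

End Graph.

Section Comb.
Variable C : numClosedFieldType.
Variable V : finType.
Variable e : rel V.
Hypothesis esym : symmetric e.
Local Notation N := #|V|.
Local Notation M := (laplacian C e).
Local Notation P := (spectralmx M).
Local Notation d := (spectral_diag M).
Local Notation Q u := ((u *m M *m u^t*) 0 0).

Lemma d_ge0 j : 0 <= d 0 j.
Proof. by rewrite -(quad_row (lap_conj C esym)) quad_ge0. Qed.

Lemma d_zero_uniq : (forall x y, connect e x y) ->
  forall j1 j2, d 0 j1 = 0 -> d 0 j2 = 0 -> j1 = j2.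
Proof.
move=> conn j1 j2 d1 d2; apply/eqP/negPn/negP => j12.
set w1 := row j1 P; set w2 := row j2 P.
have c1 : forall x, w1 0 x = w1 0 j1.
  move=> x; apply: (quad_const (C:=C) esym) => //.
  by rewrite /w1 (quad_row (lap_conj C esym)).
have c2 : forall x, w2 0 x = w2 0 j1.
  move=> x; apply: (quad_const (C:=C) esym) => //.
  by rewrite /w2 (quad_row (lap_conj C esym)).
have dot : forall (w w' : 'rV[C]_N), (forall x, w 0 x = w 0 j1) ->
    (forall x, w' 0 x = w' 0 j1) ->
    (w *m w'^t*) 0 0 = N%:R * (w 0 j1 * (w' 0 j1)^*).
  move=> w w' cw cw'; rewrite mxE.
  under eq_bigr => x _ do rewrite !mxE cw cw'.
  by rewrite sumr_const card_ord mulr_natl.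
have h12 := row_dot M j1 j2.
have h11 := row_dot M j1 j1.
have h22 := row_dot M j2 j2.
rewrite -/w1 -/w2 in h12 h11 h22.
rewrite (dot _ _ c1 c2) (negbTE j12) in h12.
rewrite (dot _ _ c1 c1) eqxx in h11.
rewrite (dot _ _ c2 c2) eqxx in h22.
have E : (N%:R * (w1 0 j1 * (w2 0 j1)^*)) * (N%:R * (w1 0 j1 * (w2 0 j1)^*))^*
   = (N%:R * (w1 0 j1 * (w1 0 j1)^*)) * (N%:R * (w2 0 j1 * (w2 0 j1)^*)) :> C.
  rewrite rmorphM /= conjC_nat rmorphM /= conjCK; ring.
by move: E; rewrite h12 h11 h22 mul0r mulr1 => /eqP; rewrite eq_sym oner_eq0.
Qed.

Local Notation c v j := ((v *m P^t*) 0 j).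

Lemma strict_big (v : 'rV[C]_N) : v != 0 ->
  (forall j, d 0 j <= 2 -> c v j = 0) ->
  2 * (v *m v^t*) 0 0 < Q v.
Proof.
move=> vN0 hc.
rewrite -subr_gt0 (quad_spec (lap_conj C esym)) (norm_spec M) mulr_sumr -sumrB.
have term : forall j, 0 <= c v j * d 0 j * (c v j)^* - 2 * (c v j * (c v j)^*).
  move=> j; case: (boolP (d 0 j <= 2)) => [/hc -> | hj].
    by rewrite !mul0r mulr0 subr0.
  have lt2 : 2 < d 0 j.
    by rewrite real_ltNge ?hj // ?ger0_real ?d_ge0 // ler0n.
  have -> : c v j * d 0 j * (c v j)^* - 2 * (c v j * (c v j)^*) =
            (d 0 j - 2) * (c v j * (c v j)^*) by ring.
  by apply: mulr_ge0; [rewrite subr_ge0 ltW | exact: mul_conjC_ge0].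
have [j cj] : exists j, c v j != 0.
  apply/existsP; apply: contraNT vN0; rewrite negb_exists => /forallP h.
  have c0 : v *m P^t* = 0.
    by apply/rowP => j; rewrite [RHS]mxE; apply/eqP; have := h j; rewrite negbK.
  have -> : v = v *m P^t* *m P by rewrite -mulmxA (PtP M) mulmx1.
  by rewrite c0 mul0mx.
rewrite (bigD1 j) //=; apply: ltr_wpDr; first by apply: sumr_ge0 => k _.
have dj : 2 < d 0 j.
  rewrite real_ltNge ?ger0_real ?d_ge0 ?ler0n //; apply/negP => /hc.
  by move/eqP; rewrite (negbTE cj).
have -> : c v j * d 0 j * (c v j)^* - 2 * (c v j * (c v j)^*) =
          (d 0 j - 2) * (c v j * (c v j)^*) by ring.
by apply: mulr_gt0; [rewrite subr_gt0 | rewrite mul_conjC_gt0].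
Qed.

Lemma two_small (one x : 'rV[C]_N) :
  (forall al be : C, Q (al *: one + be *: x) <=
      2 * ((al *: one + be *: x) *m (al *: one + be *: x)^t*) 0 0) ->
  (forall al be : C, al *: one + be *: x = 0 -> al = 0 /\ be = 0) ->
  (1 < #|[pred j | (d 0 j <= 2)%R]|)%N.
Proof.
move=> hle hind; rewrite ltnNge; apply/negP => /card_le1_eqP uniq.
have cD : forall al be (j : 'I_N), c (al *: one + be *: x) j = al * c one j + be * c x j.
  by move=> al be j; rewrite mulmxDl -!scalemxAl !mxE.
suff [al [be [nz hc]]] : exists al be, (al != 0 \/ be != 0) /\
   forall j, d 0 j <= 2 -> c (al *: one + be *: x) j = 0.
  have vN0 : al *: one + be *: x != 0.
    apply/negP => /eqP /hind [a0 b0]; by case: nz => /eqP; rewrite ?a0 ?b0.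
  by move: (strict_big vN0 hc) => /lt_geF; rewrite hle.
case: (pickP [pred j | d 0 j <= 2]) => [j0 hj0 | none]; last first.
  exists 0, 1; split; first by right; exact: oner_neq0.
  by move=> j hj; move: (none j); rewrite /= hj.
have onlyj0 : forall j, d 0 j <= 2 -> j = j0.
  by move=> j hj; apply: uniq.
case: (eqVneq (c one j0) 0) => [A0 | AN0].
  exists 1, 0; split; first by left; exact: oner_neq0.
  by move=> j /onlyj0 ->; rewrite cD A0 !mul0r mulr0 addr0.
exists (c x j0), (- c one j0); split; first by right; rewrite oppr_eq0.
by move=> j /onlyj0 ->; rewrite cD; ring.
Qed.

End Comb.

Lemma sum_ev (R : nmodType) (W : finType) (G : W -> R) :
  \sum_(i < #|W|) G (@enum_val W (fun _ => true) i) = \sum_(u : W) G u.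
Proof. apply: esym; rewrite (eq_bigl (fun y => y \in W)) //; exact: big_enum_val. Qed.

Section Chain.
Variable T : finType.
Variable g : rel T.
Hypothesis gsym : symmetric g.
Hypothesis gconn : forall x y, connect g x y.
Variable l' : nat.
Local Notation l := l'.+2.
Variables a b : 'I_l -> T.
Local Notation e := (chain_graph g a b).

Lemma chain_sym : symmetric e.
Proof.
move=> u v; rewrite /chain_graph eq_sym (gsym u.2).
by rewrite -orbA [X in _ || X]orbC orbA.
Qed.

Lemma chain_in_copy (i : 'I_l) (x y : T) : connect e (i, x) (i, y).
Proof.
have /connectP [p pth ->] := gconn x y.
elim: p x pth => [|z p IH] x /=; first by rewrite connect0.
move=> /andP [gxz pth]; apply: connect_trans (IH _ pth).
by apply: connect1; rewrite /chain_graph /= eqxx gxz.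
Qed.

Lemma chain_conn : forall x y, connect e x y.
Proof.
have base : forall (k : nat) (hk : (k < l)%N) y, connect e (ord0, a ord0) (Ordinal hk, y).
  elim => [|k IH] hk y.
    have -> : Ordinal hk = ord0 by apply: val_inj.
    exact: chain_in_copy.
  have hk' : (k < l)%N by apply: ltnW.
  apply: connect_trans (IH hk' (a (Ordinal hk'))) _.
  apply: connect_trans (chain_in_copy _ (b (Ordinal hk')) y).
  by apply: connect1; rewrite /chain_graph /= !eqxx orbT.
have cs := sym_connect_sym chain_sym.
have base' : forall u, connect e (ord0, a ord0) u.
  by case=> [[k hk] y]; exact: base.
move=> u v; apply: connect_trans (base' v); rewrite cs; exact: base'.
Qed.

Definition ord1' : 'I_l := Ordinal (isT : (1 < l)%N).
Definition pp : 'I_l * T := (ord0, a ord0).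
Definition qq : 'I_l * T := (ord1', b ord0).

Lemma cross (u w : 'I_l * T) :
  (e u w && ((u.1 == ord0) != (w.1 == ord0))) =
  ((u == pp) && (w == qq)) || ((u == qq) && (w == pp)).
Proof.
have o0 : forall (h : (0 < l)%N), Ordinal h = ord0 by move=> h; apply: val_inj.
have o1 : forall (h : (1 < l)%N), Ordinal h = ord1' by move=> h; apply: val_inj.
case: u w => [[ui hui] ux] [[wi hwi] wx].
rewrite /chain_graph /pp /qq /= !xpair_eqE.
case: ui hui => [|[|ui]] hui; case: wi hwi => [|[|wi]] hwi;
  rewrite ?o0 ?o1 /= ?eqxx ?andbF ?andbT ?orbF ?andbF //=.
all: try by case: (ux == _); case: (wx == _).
Qed.

Variable C : numClosedFieldType.
Local Notation V := ('I_l * T)%type.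
Local Notation N := #|{: V}|.
Local Notation ev := (@enum_val V (fun _ => true)).
Local Notation M := (laplacian C e).
Local Notation A i j := ((e (ev i) (ev j))%:R : C).
Local Notation ind u := (((u : V).1 == ord0)%:R : C).

Definition onev : 'rV[C]_N := const_mx 1.
Definition xv : 'rV[C]_N := \row_i ind (ev i).


Lemma pp_qq : pp != qq.
Proof. by rewrite /pp /qq xpair_eqE negb_and; apply/orP; left. Qed.

Lemma sum_pair (p q : V) : \sum_(u : V) \sum_(w : V) ((u == p) && (w == q))%:R = 1 :> C.
Proof.
under eq_bigr => u _ do under eq_bigr => w _ do rewrite -mulnb natrM.
under eq_bigr => u _ do rewrite -mulr_sumr.
rewrite -mulr_suml.
have h1 : forall r : V, \sum_(w : V) (w == r)%:R = 1 :> C.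
  move=> r; rewrite (eq_bigr (fun w => if w == r then 1 else 0)); last by move=> w _; case: (w == r).
  by rewrite -big_mkcond /= big_pred1_eq.
by rewrite !h1 mulr1.
Qed.

Lemma crossing_sum :
  \sum_(i < N) \sum_(j < N) A i j * ((xv 0 i - xv 0 j) * (xv 0 i - xv 0 j)^*) = 2.
Proof.
under eq_bigr => i _ do under eq_bigr => j _ do rewrite !mxE.
have term : forall u w : V, ((e u w)%:R : C) * ((ind u - ind w) * (ind u - ind w)^*) =
   ((u == pp) && (w == qq))%:R + ((u == qq) && (w == pp))%:R.
  move=> u w.
  have -> : ((e u w)%:R : C) * ((ind u - ind w) * (ind u - ind w)^*) =
            (e u w && ((u.1 == ord0) != (w.1 == ord0)))%:R.
    case: (e u w); case: (u.1 == ord0); case: (w.1 == ord0);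
      rewrite /= ?subrr ?subr0 ?sub0r ?rmorphN ?conjC0 ?conjC1 ?mulr0 ?mul0r ?mulr1 ?mulN1r ?opprK ?rmorph1 ?mul1r. all: try done.

  have -> : (e u w && ((u.1 == ord0) != (w.1 == ord0))) = ((u == pp) && (w == qq)) || ((u == qq) && (w == pp)) by exact: cross.
  have dis : ~~ (((u == pp) && (w == qq)) && ((u == qq) && (w == pp))).
    apply/negP => /andP [/andP [/eqP -> _] /andP [/eqP pq _]].
    by move: pp_qq; rewrite pq eqxx.
  move: dis; case: ((u == pp) && (w == qq)); case: ((u == qq) && (w == pp)) => //= _.
  - by rewrite addr0.
  - by rewrite add0r.
  - by rewrite addr0.
under eq_bigr => i _ do rewrite (sum_ev (fun w => ((e (ev i) w)%:R : C) * ((ind (ev i) - ind w) * (ind (ev i) - ind w)^*))).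
rewrite (sum_ev (fun u => \sum_w ((e u w)%:R : C) * ((ind u - ind w) * (ind u - ind w)^*))).
under eq_bigr => u _ do under eq_bigr => w _ do rewrite term.
under eq_bigr => u _ do rewrite big_split /=.
by rewrite big_split /= !sum_pair.
Qed.


Lemma ind_pp : ind pp = 1. Proof. by []. Qed.
Lemma ind_qq : ind qq = 0. Proof. by rewrite /qq /=. Qed.

Lemma test_le (al be : C) :
  ((al *: onev + be *: xv) *m M *m (al *: onev + be *: xv)^t*) 0 0 <=
  2 * ((al *: onev + be *: xv) *m (al *: onev + be *: xv)^t*) 0 0.
Proof.
set v := al *: onev + be *: xv.
have ventry : forall i, v 0 i = al + be * ind (ev i).
  by move=> i; rewrite !mxE mulr1.
have Qv : (v *m M *m v^t*) 0 0 = be * be^*.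
  have h := quad_form (C:=C) chain_sym v.
  have h2 : \sum_i \sum_j A i j * ((v 0 i - v 0 j) * (v 0 i - v 0 j)^*) =
      be * be^* * 2.
    rewrite -crossing_sum mulr_sumr; apply: eq_bigr => i _.
    rewrite mulr_sumr; apply: eq_bigr => j _.
    rewrite !ventry !mxE !rmorphB !rmorphD !rmorphM /=; ring.
  rewrite h2 mulrC in h.
  by apply: (mulIf (x := 2)) => //; rewrite pnatr_eq0.
have vP : v 0 (enum_rank pp) = al + be by rewrite ventry enum_rankK ind_pp mulr1.
have vQ : v 0 (enum_rank qq) = al by rewrite ventry enum_rankK ind_qq mulr0 addr0.
have PQ : enum_rank qq != enum_rank pp.
  by apply: contra pp_qq => /eqP /enum_rank_inj ->.
have norm_ge : v 0 (enum_rank pp) * (v 0 (enum_rank pp))^* +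
               v 0 (enum_rank qq) * (v 0 (enum_rank qq))^* <=
               (v *m v^t*) 0 0.
  have vv : forall i, (v^t*) i 0 = (v 0 i)^* by move=> i; rewrite !mxE.
  rewrite [X in _ <= X]mxE; under eq_bigr => i _ do rewrite vv.
  rewrite (bigD1 (enum_rank pp : 'I_N)) //= lerD2l.
  rewrite (bigD1 (enum_rank qq : 'I_N)) //= lerDl.
  by apply: sumr_ge0 => i _; rewrite !mxE mul_conjC_ge0.
rewrite Qv; apply: le_trans (_ : 2 * (v 0 (enum_rank pp) * (v 0 (enum_rank pp))^* +
               v 0 (enum_rank qq) * (v 0 (enum_rank qq))^*) <= _); last first.
  by rewrite ler_pM2l // ltr0n.
rewrite vP vQ -subr_ge0.
have -> : 2 * ((al + be) * (al + be)^* + al * al^*) - be * be^* =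
          (2 * al + be) * (2 * al + be)^*.
  rewrite !rmorphD !rmorphM /= conjC_nat; ring.
exact: mul_conjC_ge0.
Qed.

Lemma test_ind (al be : C) : al *: onev + be *: xv = 0 -> al = 0 /\ be = 0.
Proof.
move=> /rowP h.
have hQ := h (enum_rank qq); have hP := h (enum_rank pp).
rewrite !mxE enum_rankK ind_qq mulr0 addr0 mulr1 in hQ.
rewrite !mxE enum_rankK ind_pp !mulr1 hQ add0r in hP.
by [].
Qed.

End Chain.

Local Open Scope complex_scope.
Lemma cnt (T : finType) (P : pred T) : count P (enum T) = #|P|.
Proof.
rewrite cardE /enum_mem size_filter /= count_filter.
by apply: eq_count => x; rewrite inE andbT.
Qed.

Lemma ge0_realC (R : rcfType) (x : R[i]) : 0 <= x -> x = (complex.Re x)%:C.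
Proof. by case: x => [xr xi]; rewrite lecE /= => /andP [/eqP -> _]. Qed.

Lemma lap_map (R : rcfType) (V : finType) (e : rel V) :
  map_mx (real_complex R) (laplacian R e) = laplacian R[i] e.
Proof.
apply/matrixP => i j; rewrite !mxE rmorphB rmorphM /= !rmorph_nat.
done.
Qed.

Theorem theorem6p4 (R : rcfType) (T : finType) (g : rel T) (l : nat)
    (a b : 'I_l -> T) :
  simple_graph g -> connected_graph g -> (0 < #|T|)%N -> (2 <= l)%N ->
  0 < lambda2 R (chain_graph g a b) <= 2.
Proof.
move=> [gsym _] gconn _ l2.
case: l a b l2 => [|[|l']] a b l2 //.
have esym := chain_sym gsym a b.
have econn := chain_conn gsym gconn a b.
set e := chain_graph g a b in esym econn *.
set Mc := laplacian R[i] e.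
set d := spectral_diag Mc.
have dge0 : forall j, 0 <= d 0 j by move=> j; exact: d_ge0.
have dre : forall j, d 0 j = (complex.Re (d 0 j))%:C by move=> j; apply: ge0_realC.
have hcp : char_poly (laplacian R e) =
    \prod_(x <- [seq complex.Re (d 0 j) | j <- enum 'I_#|{: 'I_l'.+2 * T}|]) ('X - x%:P).
  apply: (@map_poly_inj _ _ (real_complex R)).
  rewrite map_char_poly lap_map (char_poly_spec (lap_conj _ esym)).
  rewrite map_prod_XsubC big_map big_enum /=.
  by apply: eq_bigr => j _; rewrite -dre.
rewrite /lambda2 /lambda /spectrum (spectrum_prod hcp) /=.
apply: sort_second.
- have z : forall j, complex.Re (d 0 j) <= 0 -> d 0 j = 0.
    move=> j h; rewrite dre; congr (_%:C); apply: le_anti; rewrite h /=.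
    by rewrite -lecR -dre dge0.
  rewrite count_map cnt; apply/card_le1_eqP => j1 j2; rewrite !inE /= => h1 h2.
  by apply: (d_zero_uniq (C:=R[i]) esym econn); apply: z.
- rewrite count_map cnt.
  have := two_small (C:=R[i]) esym (test_le gsym a b (C:=R[i])) (@test_ind _ _ a b R[i]).
  rewrite -/Mc -/d.
  congr (_ < _)%N; apply: eq_card => j; rewrite !inE /=.
  by rewrite [in LHS]dre -(rmorph_nat (real_complex R) 2) lecR.
Qed.
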